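(* Let $X,Y$ be compact topological spaces, $c\in C(X\times Y)$, fix $x_0\in X$, and for each $k>0$ let $\mu^{(k)}\in\mathcal{P}(X)$, $\nu^{(k)}\in\mathcal{P}(Y)$. Then the union $\bigcup_{k>0}S^{(k)}(C(X))$ is relatively compact in $C(X)/\mathbb{R}$; that is, the set $\{w-w(x_0):\ w\in S^{(k)}(C(X))\text{ for some }k>0\}$ is relatively compact in $C(X)$ with the sup-norm.
   Context: For $k>0$, $u\in C(X)$, $v\in C(Y)$: $v^{(k)}[u](y)=k^{-1}\log\int_Xe^{-kc(x,y)-ku(x)}d\mu^{(k)}(x)$, $u^{(k)}[v](x)=k^{-1}\log\int_Ye^{-kc(x,y)-kv(y)}d\nu^{(k)}(y)$, and $S^{(k)}(u)=u^{(k)}[v^{(k)}[u]]$. *)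

(* Defs.v *)
From HB Require Import structures.
From mathcomp Require Import all_boot all_order all_algebra.
From mathcomp Require Import all_classical all_reals all_analysis.
Set Implicit Arguments. Unset Strict Implicit. Unset Printing Implicit Defensive.
Import Order.TTheory GRing.Theory Num.Theory.
Import numFieldNormedType.Exports.
Local Open Scope classical_set_scope.
Local Open Scope ring_scope.

Notation borel X := (g_sigma_algebraType (@open X)).

Definition Prob (X : ptopologicalType) (R : realType) :=
  probability (borel X) R.

Definition vk {R : realType} {X Y : ptopologicalType} (k : R)
  (mu : Prob X R) (c : X * Y -> R) (u : X -> R) : Y -> R :=
  fun y => k^-1 * ln (fine (\int[mu]_(x in [set: borel X])
                              (expR (- k * c (x, y) - k * u x))%:E)).

Definition uk {R : realType} {X Y : ptopologicalType} (k : R)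
  (nu : Prob Y R) (c : X * Y -> R) (v : Y -> R) : X -> R :=
  fun x => k^-1 * ln (fine (\int[nu]_(y in [set: borel Y])
                              (expR (- k * c (x, y) - k * v y))%:E)).

Definition Sk {R : realType} {X Y : ptopologicalType} (k : R)
  (mu : Prob X R) (nu : Prob Y R) (c : X * Y -> R) (u : X -> R) : X -> R :=
  uk k nu c (vk k mu c u).

(* Main.v *)
Require Import Defs.
From HB Require Import structures.
From mathcomp Require Import all_boot all_order all_algebra.
From mathcomp Require Import all_classical all_reals all_analysis.
From mathcomp Require Import measurable_realfun lebesgue_integral.
From mathcomp Require Import ring lra.
Import Order.TTheory GRing.Theory Num.Theory.
Import numFieldNormedType.Exports.
Local Open Scope classical_set_scope.
Local Open Scope ring_scope.
Lemma cont_meas (R : realType) (Z : ptopologicalType) (f : Z -> R) :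
  continuous f -> measurable_fun [set: borel Z] (f : borel Z -> R).
Proof.
move=> /continuousP cf; apply: (measurability _ (measurable_realfun.RGenOpens.measurableE R)).
move=> _ [_ [a [b ->] <-]]; rewrite setTI.
apply: sub_sigma_algebra; apply: cf; exact: interval_open.
Qed.

Lemma int_bnd (R : realType) (Z : ptopologicalType) (P : Prob Z R) (a : Z -> R) (M : R) :
  measurable_fun [set: borel Z] (a : borel Z -> R) -> (forall z, `|a z| <= M) ->
  (\int[P]_(z in [set: borel Z]) (expR (a z))%:E
     = (fine (\int[P]_(z in [set: borel Z]) (expR (a z))%:E))%:E)%E /\
  expR (- M) <= fine (\int[P]_(z in [set: borel Z]) (expR (a z))%:E) <= expR M.
Proof.
move=> ma aM.
have aL : forall z, - M <= a z by move=> z; have := aM z; rewrite ler_norml => /andP[].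
have aU : forall z, a z <= M by move=> z; have := aM z; rewrite ler_norml => /andP[].
have mea : measurable_fun [set: borel Z] (fun z : borel Z => (expR (a z))%:E).
  by apply/measurable_EFinP; apply: measurableT_comp.
have lo : ((expR (- M))%:E <= \int[P]_(z in [set: borel Z]) (expR (a z))%:E)%E.
  have -> : ((expR (- M))%:E = \int[P]_(z in [set: borel Z]) (cst (expR (- M))%:E) z)%E.
    rewrite integral_cst // -[LHS]mule1; congr (_ * _)%E; exact: (esym (probability_setT P)).
  by apply: ge0_le_integral => // z _; rewrite lee_fin ?expR_ge0 ?ler_expR.
have hi : (\int[P]_(z in [set: borel Z]) (expR (a z))%:E <= (expR M)%:E)%E.
  have -> : ((expR M)%:E = \int[P]_(z in [set: borel Z]) (cst (expR M)%:E) z)%E.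
    rewrite integral_cst // -[LHS]mule1; congr (_ * _)%E; exact: (esym (probability_setT P)).
  by apply: ge0_le_integral => // z _; rewrite lee_fin ?expR_ge0 ?ler_expR.
move: lo hi; set I := (\int[P]_(z in _) _)%E.
case: I => [r| |] //=; rewrite !lee_fin => h1 h2; by split => //; rewrite h1 h2.
Qed.

Lemma lse_le (R : realType) (Z : ptopologicalType) (P : Prob Z R) (a b : Z -> R) (M d : R) :
  measurable_fun [set: borel Z] (a : borel Z -> R) ->
  measurable_fun [set: borel Z] (b : borel Z -> R) ->
  (forall z, `|a z| <= M) -> (forall z, `|b z| <= M) ->
  (forall z, a z <= b z + d) ->
  ln (fine (\int[P]_(z in [set: borel Z]) (expR (a z))%:E)) <=
  ln (fine (\int[P]_(z in [set: borel Z]) (expR (b z))%:E)) + d.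
Proof.
move=> ma mb aM bM ab.
have [Ea /andP[Ia0 _]] := @int_bnd _ _ P _ _ ma aM.
have [Eb /andP[Ib0 _]] := @int_bnd _ _ P _ _ mb bM.
set Ia := fine _ in Ea Ia0 *; set Ib := fine _ in Eb Ib0 *.
have mEb : measurable_fun [set: borel Z] (fun z : borel Z => (expR (b z))%:E).
  by apply/measurable_EFinP; apply: measurableT_comp.
have h : (Ia%:E <= (expR d)%:E * Ib%:E)%E.
  rewrite -Ea -Eb -ge0_integralZl_EFin //.
  apply: ge0_le_integral => //.
  - by apply/measurable_EFinP; apply: measurableT_comp.
  - exact: measurable_funeM.
  - by move=> z _; rewrite -EFinM lee_fin -expRD ler_expR addrC.
rewrite -EFinM lee_fin in h.
have Ia_gt0 : 0 < Ia by apply: lt_le_trans Ia0; exact: expR_gt0.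
have Ib_gt0 : 0 < Ib by apply: lt_le_trans Ib0; exact: expR_gt0.
rewrite -ler_expR expRD !lnK ?posrE //.
by rewrite mulrC.
Qed.
Lemma tube (R : realType) (A B : topologicalType) (hA : compact [set: A])
  (c : A * B -> R) (hc : continuous c) (b0 : B) (e : R) (e0 : 0 < e) :
  \forall b \near b0, forall a, `|c (a, b0) - c (a, b)| < e.
Proof.
have := (proj1 (compact_near_coveringP _) hA B (nbhs b0)
   (fun b a => `|c (a, b0) - c (a, b)| < e) _).
move=> /(_ _) H.
have : \forall b \near b0, [set: A] `<=` (fun a => `|c (a, b0) - c (a, b)| < e).
  apply: H => a _.
  have e20 : 0 < e / 2 by rewrite divr_gt0.
  move: (hc (a, b0)) => /cvgr_dist_lt /(_ _ e20).
  move=> [[U V] /= [nU nV] UV].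
  exists (U, V) => //= -[a' b] [Ua' Vb] /=.
  have h1 := UV (a', b) (conj Ua' Vb).
  have h2 := UV (a', b0) (conj Ua' (nbhs_singleton nV)).
  rewrite /= in h1 h2.
  rewrite (splitr e).
  apply: le_lt_trans (ltrD h2 h1).
  have -> : c (a', b0) - c (a', b) = - (c (a, b0) - c (a', b0)) + (c (a, b0) - c (a', b)).
    by rewrite opprB addrA subrK.
  by rewrite (le_trans (ler_normD _ _)) // normrN.
by apply: filterS => b Hb a; apply: Hb.
Qed.

Lemma cont_bnd (R : realType) (T : topologicalType) (hT : compact [set: T])
  (f : T -> R) : continuous f -> exists M, forall t, `|f t| <= M.
Proof.
move=> cf.
have cpt : compact (f @` [set: T]).
  by apply: continuous_compact => //; apply: continuous_subspaceT.
have := compact_bounded cpt.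
case=> M0 [_ HM]; exists (M0 + 1) => t.
apply: (HM (M0 + 1)); first by rewrite ltrDl.
by exists t.
Qed.
Lemma fam_unif_nbhs (R : realType) (X : topologicalType) (hX : compact [set: X]) :
  (@nbhs _ {family compact, X -> R} : (X -> R) -> set_system (X -> R))
  = @nbhs _ {uniform X -> R}.
Proof.
apply/funext => f; apply/seteqP; split => A.
- have : {uniform, nbhs (f : {uniform X -> R}) --> f} by [].
  move=> H; have : {family compact, nbhs (f : {uniform X -> R}) --> f}.
    apply/fam_cvgP => B cB; apply: (uniform_subset_cvg _ _ H) => //.
  by move=> /(_ A).
- have H : {family compact, nbhs (f : {family compact, X -> R}) --> f} by [].
  have := (proj1 (@fam_cvgP _ _ compact (nbhs (f : {family compact, X -> R})) f (@nbhs_filter {family compact, X -> R} f)) H setT hX).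
  by move=> /(_ A).
Qed.

Lemma transfer (R : realType) (X : topologicalType) (hX : compact [set: X]) (W : set (X -> R)) :
  precompact (W : set {family compact, X -> R}) -> precompact (W : set {uniform X -> R}).
Proof.
rewrite !precompactE /compact /cluster /closure.
by rewrite (@fam_unif_nbhs R X hX).
Qed.

Lemma lse_lip (R : realType) (Z : ptopologicalType) (P : Prob Z R) (k : R) (k0 : 0 < k)
  (f g h : Z -> R) (M d : R) :
  measurable_fun [set: borel Z] (f : borel Z -> R) ->
  measurable_fun [set: borel Z] (g : borel Z -> R) ->
  measurable_fun [set: borel Z] (h : borel Z -> R) ->
  (forall z, `|f z| <= M) -> (forall z, `|g z| <= M) -> (forall z, `|h z| <= M) ->
  (forall z, `|f z - g z| <= d) ->
  `|k^-1 * ln (fine (\int[P]_(z in [set: borel Z]) (expR (- k * f z - k * h z))%:E)) -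
    k^-1 * ln (fine (\int[P]_(z in [set: borel Z]) (expR (- k * g z - k * h z))%:E))| <= d.
Proof.
move=> mf mg mh fM gM hM fg.
have mk : forall q : borel Z -> R, measurable_fun [set: borel Z] q ->
    measurable_fun [set: borel Z] (fun z => - k * q z - k * h z).
  move=> q mq; apply: measurable_funB.
    by apply: measurable_funM => //; exact: measurable_cst.
  by apply: measurable_funM => //; exact: measurable_cst.
have bk : forall q : Z -> R, (forall z, `|q z| <= M) ->
    forall z, `|- k * q z - k * h z| <= k * M + k * M.
  move=> q qM z; apply: le_trans (ler_normB _ _) _.
  rewrite !normrM normrN (gtr0_norm k0).
  by apply: lerD; rewrite ler_wpM2l // ltW.
have key : forall q1 q2 : borel Z -> R,
    measurable_fun [set: borel Z] q1 -> measurable_fun [set: borel Z] q2 ->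
    (forall z, `|q1 z| <= M) -> (forall z, `|q2 z| <= M) ->
    (forall z, `|q1 z - q2 z| <= d) ->
  k^-1 * ln (fine (\int[P]_(z in [set: borel Z]) (expR (- k * q1 z - k * h z))%:E)) <=
    k^-1 * ln (fine (\int[P]_(z in [set: borel Z]) (expR (- k * q2 z - k * h z))%:E)) + d.
  move=> q1 q2 m1 m2 b1 b2 b12.
  have H := @lse_le _ _ P _ _ _ (k * d) (mk _ m1) (mk _ m2) (bk _ b1) (bk _ b2).
  have {}H : ln (fine (\int[P]_(z in [set: borel Z]) (expR (- k * q1 z - k * h z))%:E)) <=
    ln (fine (\int[P]_(z in [set: borel Z]) (expR (- k * q2 z - k * h z))%:E)) + k * d.
    apply: H => z.
    have := b12 z; rewrite distrC ler_distl => /andP[_ H2].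
    have : k * q2 z <= k * (q1 z + d) by rewrite ler_wpM2l // ?ltW // -lerBlDr.
    lra.
  have kV0 : 0 < k^-1 by rewrite invr_gt0.
  have := ler_wpM2l (ltW kV0) H.
  by rewrite mulrDr mulrA mulVf ?gt_eqF // mul1r.
rewrite ler_distl; apply/andP; split.
- rewrite lerBlDr; apply: key => // z; by rewrite distrC.
- exact: key.
Qed.

Lemma sec1 (R : realType) (A B : topologicalType) (c : A * B -> R) (hc : continuous c) (b : B) :
  continuous (fun a => c (a, b)).
Proof.
move=> a; apply: (@continuous_comp _ _ _ (fun a => (a, b)) c a); last exact: hc.
by apply: cvg_pair; [exact: cvg_id | exact: cvg_cst].
Qed.

Lemma sec2 (R : realType) (A B : topologicalType) (c : A * B -> R) (hc : continuous c) (a : A) :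
  continuous (fun b => c (a, b)).
Proof.
move=> b; apply: (@continuous_comp _ _ _ (fun b => (a, b)) c b); last exact: hc.
by apply: cvg_pair; [exact: cvg_cst | exact: cvg_id].
Qed.

Lemma core (R : realType) (X Y : ptopologicalType) (hX : compact [set: X])
  (c : X * Y -> R) (hc : continuous c) (Mc : R) (hMc : forall p, `|c p| <= Mc)
  (k : R) (k0 : 0 < k) (mu : Prob X R) (nu : Prob Y R) (u : X -> R) (hu : continuous u)
  (x x' : X) (d : R) :
  (forall y, `|c (x, y) - c (x', y)| <= d) ->
  `|Sk k mu nu c u x - Sk k mu nu c u x'| <= d.
Proof.
move=> hd.
have [Mu hMu] := @cont_bnd R X hX u hu.
have Mc0 : 0 <= Mc := le_trans (normr_ge0 _) (hMc (point, point)).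
have Mu0 : 0 <= Mu := le_trans (normr_ge0 _) (hMu point).
set M := Mc + Mu.
have cM : forall p, `|c p| <= M by move=> p; rewrite (le_trans (hMc p)) // lerDl.
have uM : forall t, `|u t| <= M by move=> t; rewrite (le_trans (hMu t)) // lerDr.
have vB : forall y, `|vk k mu c u y| <= M.
  move=> y; rewrite /vk.
  have ma : measurable_fun [set: borel X]
      ((fun x => - k * c (x, y) - k * u x) : borel X -> R).
    apply: measurable_funB; apply: measurable_funM => //; try exact: measurable_cst.
      exact: (@cont_meas _ _ _ (@sec1 _ _ _ c hc y)).
    exact: (@cont_meas _ _ _ hu).
  have aB : forall x, `|- k * c (x, y) - k * u x| <= k * M.
    move=> t; apply: le_trans (ler_normB _ _) _.
    rewrite !normrM normrN (gtr0_norm k0) /M mulrDr.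
    by apply: lerD; rewrite ler_wpM2l // ltW.
  have [_ /andP[lo hi]] := @int_bnd _ _ mu _ _ ma aB.
  set I := fine _ in lo hi *.
  have I0 : 0 < I by apply: lt_le_trans lo; exact: expR_gt0.
  have hL : `|ln I| <= k * M.
    rewrite ler_norml; apply/andP; split.
      by rewrite -ler_expR lnK ?posrE.
    by rewrite -ler_expR lnK ?posrE.
  rewrite normrM gtr0_norm ?invr_gt0 //.
  have kV : 0 < k^-1 by rewrite invr_gt0.
  have := ler_wpM2l (ltW kV) hL.
  by rewrite mulrA mulVf ?gt_eqF // mul1r.
have vC : continuous (vk k mu c u).
  move=> y0; apply/cvgrPdist_le => e e0.
  apply: filterS (@tube R X Y hX c hc y0 e e0) => y Hy.
  rewrite /vk.
  apply: (@lse_lip _ _ mu k k0 (fun x => c (x, y0)) (fun x => c (x, y)) u M e).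
  - exact: (@cont_meas _ _ _ (@sec1 _ _ _ c hc _)).
  - exact: (@cont_meas _ _ _ (@sec1 _ _ _ c hc _)).
  - exact: (@cont_meas _ _ _ hu).
  - by move=> t; exact: cM.
  - by move=> t; exact: cM.
  - exact: uM.
  - by move=> t; apply: ltW; exact: Hy.
rewrite /Sk /uk.
apply: (@lse_lip _ _ nu k k0 (fun y => c (x, y)) (fun y => c (x', y)) (vk k mu c u) M d).
- exact: (@cont_meas _ _ _ (@sec2 _ _ _ c hc _)).
- exact: (@cont_meas _ _ _ (@sec2 _ _ _ c hc _)).
- exact: (@cont_meas _ _ _ vC).
- by move=> t; exact: cM.
- by move=> t; exact: cM.
- exact: vB.
- exact: hd.
Qed.

Theorem lemma2p12 (R : realType) (X Y : ptopologicalType)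
  (hX : compact [set: X]) (hY : compact [set: Y])
  (c : X * Y -> R) (hc : continuous c) (x0 : X)
  (mu : R -> Prob X R) (nu : R -> Prob Y R) :
  precompact
    ([set (fun x => w x - w x0) | w in
       [set w | exists k : R, 0 < k /\
          exists u : X -> R, continuous u /\ w = Sk k (mu k) (nu k) c u]]
     : set {uniform X -> R}).
Proof.
have cXY : compact [set: X * Y] by rewrite -setXTT; exact: compact_setX.
have [Mc hMc] := @cont_bnd R _ cXY c hc.
have hcs : continuous (fun p : Y * X => c (p.2, p.1)).
  move=> p; apply: (@continuous_comp _ _ _ (@unstable.swap Y X) c p); last exact: hc.
  exact: swap_continuous.
apply: (@transfer R X hX).
apply: (@pointwise_precompact_equicontinuous X R (@Rhausdorff R)).
- move=> x.
  apply: (@precompact_subset _ _ `[- (Mc + Mc), Mc + Mc]%classic).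
    move=> _ [_ [w Hw <-] <-].
    case: Hw => k [k0 [u [hu ->]]].
    rewrite /= in_itv /= -ler_norml.
    apply: (@core R X Y hX c hc Mc hMc k k0 (mu k) (nu k) u hu x x0 (Mc + Mc)).
    move=> y; apply: le_trans (ler_normB _ _) _.
    by apply: lerD; apply: hMc.
  apply: compact_precompact; first exact: Rhausdorff.
  exact: segment_compact.
- move=> x E; rewrite -entourage_ballE => -[e /= e0 sub].
  have e2 : 0 < e / 2 by rewrite divr_gt0.
  apply: filterS (@tube R Y X hY _ hcs x (e / 2) e2) => y Hy.
  move=> _ [w Hw <-]; case: Hw => k [k0 [u [hu ->]]].
  apply: sub; rewrite /ball /=.
  rewrite opprB addrA subrK.
  apply: le_lt_trans.
    apply: (@core R X Y hX c hc Mc hMc k k0 (mu k) (nu k) u hu x y (e / 2)).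
    by move=> z; apply: ltW; exact: Hy.
  lra.
Qed.
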